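(* Let $\mathfrak{A} = (A; \mathcal{I})$ be a countable structure and $T$ a first-order theory consisting of $\Pi_2$ sentences, both over the same signature $\sigma$. Then either $|\mathrm{Sub}(\mathfrak{A}, T)| \leq \aleph_0$ or $|\mathrm{Sub}(\mathfrak{A}, T)| = 2^{\aleph_0}$.
   Context: $\mathrm{Sub}(\mathfrak A,T)$ is the set of all substructures $\mathfrak B$ of $\mathfrak A$ with $\mathfrak B\models T$. A structure $(A;\mathcal I)$, where $\mathcal I$ interprets the signature $\mathrm{dom}(\mathcal I)$, is countable iff $\max\{|A|,|\mathcal I|\}$ is countable. *)

(* Defs.v *)
From mathcomp Require Import all_boot.
From mathcomp Require Import boolp classical_sets cardinality.

Set Implicit Arguments.
Unset Strict Implicit.
Unset Printing Implicit Defensive.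

Local Open Scope classical_set_scope.

(* A (one-sorted, first-order) signature: function symbols (constants are the
   0-ary ones) and relation symbols, each with an arity.  Equality is built in. *)
Record signature := Signature {
  funsym : Type;
  relsym : Type;
  farity : funsym -> nat;
  rarity : relsym -> nat }.

Section FOL.
Variable sg : signature.

(* Terms, variables as de Bruijn indices. *)
Inductive term : Type :=
| Var : nat -> term
| App : forall f : funsym sg, ('I_(farity f) -> term) -> term.

Inductive form : Type :=
| FFalse : form
| FEq : term -> term -> form
| FRel : forall r : relsym sg, ('I_(rarity r) -> term) -> form
| FNot : form -> form
| FAnd : form -> form -> form
| FOr : form -> form -> form
| FImp : form -> form -> form
| FAll : form -> form
| FEx : form -> form.

Fixpoint term_bound (k : nat) (t : term) : Prop :=
  match t with
  | Var n => (n < k)%N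
  | App f ts => forall i, term_bound k (ts i)
  end.

Fixpoint form_bound (k : nat) (phi : form) : Prop :=
  match phi with
  | FFalse => True
  | FEq t1 t2 => term_bound k t1 /\ term_bound k t2
  | FRel r ts => forall i, term_bound k (ts i)
  | FNot p => form_bound k p
  | FAnd p q | FOr p q | FImp p q => form_bound k p /\ form_bound k q
  | FAll p | FEx p => form_bound k.+1 p
  end.

Definition sentence (phi : form) : Prop := form_bound 0 phi.

Fixpoint qfree (phi : form) : Prop :=
  match phi with
  | FFalse | FEq _ _ | FRel _ _ => True
  | FNot p => qfree p
  | FAnd p q | FOr p q | FImp p q => qfree p /\ qfree q
  | FAll _ | FEx _ => False
  end.

Definition Pi2_sentence (phi : form) : Prop :=
  sentence phi /\
  exists (n m : nat) (psi : form),
    qfree psi /\ phi = iter n FAll (iter m FEx psi).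

Record structure := Structure {
  carrier : Type;
  ifun : forall f : funsym sg, ('I_(farity f) -> carrier) -> carrier;
  irel : forall r : relsym sg, ('I_(rarity r) -> carrier) -> Prop }.

Section Semantics.
Variable M : structure.

Definition scons (a : carrier M) (env : nat -> carrier M) : nat -> carrier M :=
  fun n => match n with 0 => a | n'.+1 => env n' end.

Fixpoint eval (env : nat -> carrier M) (t : term) : carrier M :=
  match t with
  | Var n => env n
  | App f ts => ifun (fun i => eval env (ts i))
  end.

(* Satisfaction in the substructure of M with domain B (quantifiers range
   over B; atomic formulas are interpreted by restriction of M). *)
Fixpoint sat_in (B : set (carrier M)) (env : nat -> carrier M) (phi : form)
  : Prop :=
  match phi with
  | FFalse => False
  | FEq t1 t2 => eval env t1 = eval env t2
  | FRel r ts => irel (fun i => eval env (ts i))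
  | FNot p => ~ sat_in B env p
  | FAnd p q => sat_in B env p /\ sat_in B env q
  | FOr p q => sat_in B env p \/ sat_in B env q
  | FImp p q => sat_in B env p -> sat_in B env q
  | FAll p => forall a, B a -> sat_in B (scons a env) p
  | FEx p => exists2 a, B a & sat_in B (scons a env) p
  end.

Definition sub_closed (B : set (carrier M)) : Prop :=
  forall (f : funsym sg) (args : 'I_(farity f) -> carrier M),
    (forall i, B (args i)) -> B (ifun args).

(* The substructure with domain B satisfies the theory T
   (T consists of sentences, so the environment is irrelevant). *)
Definition sub_models (B : set (carrier M)) (T : set form) : Prop :=
  forall phi, T phi -> forall env : nat -> carrier M, sat_in B env phi.

(* Sub(M, T): substructures of M (identified with their domains, which
   determine them uniquely) that are models of T. *)
Definition SubModels (T : set form) : set (set (carrier M)) :=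
  [set B | sub_closed B /\ sub_models B T].

End Semantics.
End FOL.

Arguments Var {sg}.
Arguments SubModels {sg} M T.

(* Main.v *)
From Stdlib Require List.
Require Import Defs.
From mathcomp Require Import all_boot.
From mathcomp Require Import boolp classical_sets cardinality.
Local Open Scope classical_set_scope.
Set Implicit Arguments.
Unset Strict Implicit.
Unset Printing Implicit Defensive.
Local Open Scope classical_set_scope.

Lemma cnt_sub T (A B : set T) : A `<=` B -> countable B -> countable A.
Proof. by move=> AB; apply: sub_countable; apply: subset_card_le. Qed.

Lemma cnt_U T (A B : set T) : countable A -> countable B -> countable (A `|` B).
Proof.
move=> cA cB.
have -> : A `|` B = \bigcup_(b in [set: bool]) (if b then A else B).
  apply/seteqP; split=> x.
    by case=> h; [exists true | exists false].
  by case=> -[] _ h; [left|right].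
by apply: bigcup_countable => // -[].
Qed.

Lemma uncnt_ex T (A : set T) : ~ countable A -> exists x, A x.
Proof.
move=> nA; apply: contra_notP nA => H.
have -> : A = set0 by apply/seteqP; split=> x // Ax; apply: H; exists x.
exact: countable0.
Qed.

Lemma cnt_guard T (A : set T) (c : Prop) :
  (c -> countable A) -> countable [set y | A y /\ c].
Proof.
move=> h; have [/h cA|nc] := pselect c.
  by apply: cnt_sub cA => y [].
by apply: (cnt_sub (B := set0)) => // y [].
Qed.
Section PSP.
Variable X : Type.
Variable code : X -> nat.
Hypothesis code_inj : injective code.

Definition Cyl (K : nat) (B : set X) : set (set X) :=
  fun B' => forall x, (code x < K)%N -> (B' x <-> B x).

Lemma Cyl_refl K B : Cyl K B B. Proof. by []. Qed.
Lemma Cyl_mono K K' B B' : (K <= K')%N -> Cyl K' B B' -> Cyl K B B'.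
Proof. by move=> le h x lt; apply: h; apply: leq_trans le. Qed.
Lemma Cyl_trans K B B' B'' : Cyl K B B' -> Cyl K B' B'' -> Cyl K B B''.
Proof. by move=> h1 h2 x lt; rewrite (h2 x lt) (h1 x lt). Qed.
Lemma Cyl_sym K B B' : Cyl K B B' -> Cyl K B' B.
Proof. by move=> h x lt; rewrite (h x lt). Qed.

Lemma countX : countable [set: X].
Proof. by apply/countable_injP; exists code => x y _ _; apply: code_inj. Qed.

Lemma refine (Z : set (set X)) K : ~ countable Z ->
  exists B, Z B /\ ~ countable (Z `&` Cyl K B).
Proof.
move=> nZ; elim: K => [|K [B [ZB nY]]].
  have [B ZB] := uncnt_ex nZ; exists B; split=> // cY; apply: nZ.
  by apply: cnt_sub cY => B' ZB'; split=> // x.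
set Y := Z `&` Cyl K B in nY.
have [[x cx]|nx] := pselect (exists x, code x = K); last first.
  exists B; split=> // cY; apply: nY; apply: cnt_sub cY => B' [ZB' h]; split=> // y.
  rewrite ltnS leq_eqVlt => /orP[/eqP e|]; last exact: h.
  by case: nx; exists y.
have gen (Q : set (set X)) : ~ countable (Y `&` Q) ->
    (forall B1 B2, Q B1 -> Q B2 -> (B1 x <-> B2 x)) ->
    exists B2, Z B2 /\ ~ countable (Z `&` Cyl K.+1 B2).
  move=> nYQ hQ; have [B2 [[ZB2 CB2] QB2]] := uncnt_ex nYQ.
  exists B2; split=> // cW; apply: nYQ; apply: cnt_sub cW => B' [[ZB' CB'] QB'].
  split=> // y; rewrite ltnS leq_eqVlt => /orP[/eqP e|lt].
    by rewrite -cx in e; rewrite (code_inj e); apply: hQ.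
  by rewrite (CB' y lt) (CB2 y lt).
have [c1|n1] := pselect (countable (Y `&` (fun B' => B' x))); last first.
  by apply: (gen _ n1) => B1 B2 h1 h2; split.
have [c2|n2] := pselect (countable (Y `&` (fun B' => ~ B' x))); last first.
  by apply: (gen _ n2) => B1 B2 h1 h2; split.
case: nY; apply: cnt_sub (cnt_U c1 c2) => B' YB'.
by have [h|h] := pselect (B' x); [left|right].
Qed.
Variable F : set X -> Prop.
Hypothesis F_closed : forall B, (forall K, exists B', F B' /\ Cyl K B B') -> F B.
Variable req : nat -> set X -> Prop.
Hypothesis req_open : forall k B, req k B -> exists K, forall B', Cyl K B B' -> req k B'.

Definition SS : set (set X) := fun B => F B /\ forall k, req k B.
Definition good K B := ~ countable (SS `&` Cyl K B).

Lemma shrink k N B0 : good N B0 -> exists K B, (N <= K)%N /\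
  (forall B', Cyl K B B' -> Cyl N B0 B' /\ req k B') /\ good K B.
Proof.
move=> gN; set Z := SS `&` Cyl N B0 in gN.
pose ZK K : set (set X) := fun B => Z B /\ forall B', Cyl (maxn K N) B B' -> req k B'.
have [[K nK]|allc] := pselect (exists K, ~ countable (ZK K)); last first.
  case: gN; apply: (cnt_sub (B := \bigcup_(K in [set: nat]) ZK K)).
    move=> B ZB; have [K hK] := req_open (ZB.1.2 k); exists K => //; split=> //.
    by move=> B' hB'; apply: hK; apply: Cyl_mono hB'; apply: leq_maxl.
  apply: bigcup_countable => // K _; apply: contra_notP allc => h; by exists K.
have [B [[[SB CB] hB] nW]] := refine (maxn K N) nK.
exists (maxn K N), B; split; first exact: leq_maxr.
split.
  move=> B' hB'; split; last exact: hB.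
  apply: Cyl_trans CB _; apply: Cyl_mono hB'; exact: leq_maxr.
move=> cW; apply: nW; apply: cnt_sub cW => B' [[ZB' _] hB']; split=> //; exact: ZB'.1.
Qed.

Lemma split_ex K B : good K B -> exists x,
  ~ countable ((SS `&` Cyl K B) `&` (fun B' => B' x)) /\
  ~ countable ((SS `&` Cyl K B) `&` (fun B' => ~ B' x)).
Proof.
move=> gK; set Z := SS `&` Cyl K B in gK *.
apply: contra_notP gK => H.
pose Bh : set X := fun x => ~ countable (Z `&` (fun B' => B' x)).
pose C x : set (set X) :=
  [set B' | (Z `&` (fun B' => B' x)) B' /\ countable (Z `&` (fun B' => B' x))] `|`
  [set B' | (Z `&` (fun B' => ~ B' x)) B' /\ countable (Z `&` (fun B' => ~ B' x))].
apply: (cnt_sub (B := [set Bh] `|` \bigcup_(x in [set: X]) C x)).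
  move=> B' ZB'; have [->|ne] := pselect (B' = Bh); first by left.
  right; have [x nx] : exists x, ~ (B' x <-> Bh x).
    apply: contra_notP ne => h; apply/funext => x; apply/propext.
    by apply: contra_notP h => h'; exists x.
  exists x => //; have [bx|bx] := pselect (B' x).
    left; split=> //; apply: contra_notP nx => h; split=> // _; exact: h.
  right; split=> //.
  have hb : Bh x by apply: contra_notP nx => h; split=> // /h.
  by apply: contra_notP H => h; exists x; split.
apply: cnt_U => //; apply: bigcup_countable; first exact: countX.
move=> x _; apply: cnt_U; exact: cnt_guard.
Qed.
Record stepP k N B0 N1 B1 B2 (x : X) : Prop := StepP {
  sp_le : (N <= N1)%N;
  sp_lt : (k < N1)%N;
  sp_c1 : forall B', Cyl N1 B1 B' -> Cyl N B0 B' /\ req k B';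
  sp_c2 : forall B', Cyl N1 B2 B' -> Cyl N B0 B' /\ req k B';
  sp_x : (code x < N1)%N;
  sp_1 : B1 x;
  sp_2 : ~ B2 x;
  sp_g1 : good N1 B1;
  sp_g2 : good N1 B2 }.

Lemma step_ex k N B0 : good N B0 ->
  exists q : nat * set X * set X * X, stepP k N B0 q.1.1.1 q.1.1.2 q.1.2 q.2.
Proof.
move=> /(shrink k)[K [B [le [hC gK]]]].
have [x [nt nf]] := split_ex gK.
set N1 := maxn (maxn K k.+1) (code x).+1.
have leK : (K <= N1)%N by rewrite /N1 leq_max leq_maxl.
have [B1 [[[SB1 CB1] x1] nW1]] := refine N1 nt.
have [B2 [[[SB2 CB2] x2] nW2]] := refine N1 nf.
have cc Bi : Cyl K B Bi -> forall B', Cyl N1 Bi B' -> Cyl N B0 B' /\ req k B'.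
  move=> CBi B' h; apply: hC; apply: Cyl_trans CBi _; exact: Cyl_mono h.
exists (N1, B1, B2, x); split => //=.
- apply: leq_trans le leK.
- by rewrite /N1 leq_max; apply/orP; left; rewrite leq_max ltnSn orbT.
- exact: cc.
- exact: cc.
- by rewrite /N1 leq_max ltnSn orbT.
- move=> cW; apply: nW1; apply: cnt_sub cW => B' [[[SB' _] _] h]; by split.
- move=> cW; apply: nW2; apply: cnt_sub cW => B' [[[SB' _] _] h]; by split.
Qed.
Hypothesis nS : ~ countable SS.

Definition node := {p : nat * set X | good p.1 p.2}.

Lemma root_good : good 0 set0.
Proof. by move=> c; apply: nS; apply: cnt_sub c => B h; split. Qed.
Definition root : node := exist _ (0, set0) root_good.

Definition childq k (p : node) := cid (step_ex k (proj2_sig p)).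
Definition childraw k (p : node) (b : bool) : nat * set X :=
  let q := sval (childq k p) in (q.1.1.1, if b then q.1.1.2 else q.1.2).
Lemma childP k p : let q := sval (childq k p) in
  stepP k (sval p).1 (sval p).2 q.1.1.1 q.1.1.2 q.1.2 q.2.
Proof. exact: (svalP (childq k p)). Qed.
Lemma child_good k p b : good (childraw k p b).1 (childraw k p b).2.
Proof. by have := childP k p; rewrite /childraw; case: b => /= -[]. Qed.
Definition child k p b : node := exist _ (childraw k p b) (@child_good k p b).

Fixpoint path (al : nat -> bool) n : node :=
  if n is n'.+1 then child n' (path al n') (al n') else root.

Definition Np al n := (sval (path al n)).1.
Definition Bp al n := (sval (path al n)).2.

Lemma path_step al n :
  (Np al n <= Np al n.+1)%N /\ (n < Np al n.+1)%N /\
  forall B', Cyl (Np al n.+1) (Bp al n.+1) B' ->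
     Cyl (Np al n) (Bp al n) B' /\ req n B'.
Proof.
rewrite /Np /Bp /=; rewrite /childraw /=.
have := childP n (path al n); case: (al n) => -[] /=; by auto.
Qed.

Lemma path_mono al m n : (m <= n)%N ->
  (Np al m <= Np al n)%N /\
  forall B', Cyl (Np al n) (Bp al n) B' -> Cyl (Np al m) (Bp al m) B'.
Proof.
elim: n => [|n IH]; first by rewrite leqn0 => /eqP->.
rewrite leq_eqVlt => /orP[/eqP->//|]; rewrite ltnS => /IH[h1 h2].
have [s1 [_ s3]] := path_step al n.
split; first exact: leq_trans h1 s1.
by move=> B' hB'; apply: h2; exact: (s3 _ hB').1.
Qed.

Lemma Np_ge al n : (n <= Np al n)%N.
Proof. by case: n => // n; have [_ [h _]] := path_step al n. Qed.

Definition Lim al : set X := fun x => Bp al (code x).+1 x.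

Lemma Lim_in al n : Cyl (Np al n) (Bp al n) (Lim al).
Proof.
move=> x lt; rewrite /Lim.
set m := maxn n (code x).+1.
have [_ h1] := path_mono al (leq_maxl n (code x).+1).
have [_ h2] := path_mono al (leq_maxr n (code x).+1).
have lt2 : (code x < Np al (code x).+1)%N by have [_ [h _]] := path_step al (code x).
rewrite -(h2 _ (@Cyl_refl _ _) x lt2).
exact: (h1 _ (@Cyl_refl _ _) x lt).
Qed.

Lemma Lim_S al : SS (Lim al).
Proof.
split.
  apply: F_closed => K.
  have [B' [SB' CB']] := uncnt_ex (proj2_sig (path al K.+1)).
  exists B'; split; first exact: SB'.1.
  have ge := Np_ge al K.+1.
  move=> x lt; have lt' : (code x < Np al K.+1)%N by apply: leq_trans ge; apply: ltnW.
  by rewrite (CB' x lt') (@Lim_in al K.+1 x lt').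
move=> k; have [_ [_ h]] := path_step al k.
exact: (h _ (@Lim_in al k.+1)).2.
Qed.

Lemma path_agree al be n : (forall m, (m < n)%N -> al m = be m) -> path al n = path be n.
Proof.
elim: n => [//|n IH] h /=.
rewrite IH; last by move=> m lt; apply: h; apply: ltnW.
by rewrite h.
Qed.

Lemma Lim_inj : injective Lim.
Proof.
move=> al be E; apply/funext => n; elim/ltn_ind: n => n IH.
have pe := path_agree IH.
have hl := @Lim_in al n.+1; have hb := @Lim_in be n.+1.
move: hl hb; rewrite /Np /Bp /= pe /childraw /=.
have := childP n (path be n).
set q := sval _ => -[_ _ _ _ hx h1 h2 _ _].
case: (al n); case: (be n) => //= hl hb.
  by case: h2; rewrite -(hb _ hx) -E (hl _ hx).
by case: h2; rewrite -(hl _ hx) E (hb _ hx).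
Qed.

End PSP.
Lemma perfect_set (X : Type) (code : X -> nat) (F : set X -> Prop)
  (req : nat -> set X -> Prop) :
  injective code ->
  (forall B, (forall K, exists B', F B' /\ Cyl code K B B') -> F B) ->
  (forall k B, req k B -> exists K, forall B', Cyl code K B B' -> req k B') ->
  ~ countable (SS F req) ->
  exists L : (nat -> bool) -> set X, (forall al, SS F req (L al)) /\ injective L.
Proof.
move=> ci Fc ro nS; exists (Lim ci ro nS); split.
  move=> al; exact: Lim_S.
exact: Lim_inj.
Qed.
Unset Implicit Arguments.
Section Enc.
Variable sg : signature.
Variable cf : funsym sg -> nat.
Variable cr : relsym sg -> nat.
Hypothesis cf_inj : injective cf.
Hypothesis cr_inj : injective cr.

Fixpoint enc_t (t : term sg) : GenTree.tree nat :=
  match t with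
  | Var n => GenTree.Leaf n
  | App f ts => GenTree.Node (cf f) [seq enc_t (ts i) | i <- enum 'I_(farity f)]
  end.

Lemma enc_t_inj : injective enc_t.
Proof.
elim => [n|f ts IH] [m|g us] //=; first by case=> ->.
case=> /cf_inj e; subst g => /eq_in_map h.
congr App; apply/funext => i; apply: IH; apply: h; exact: mem_enum.
Qed.

Fixpoint enc_f (p : form sg) : GenTree.tree nat :=
  match p with
  | FFalse => GenTree.Node 0 [::]
  | FEq t1 t2 => GenTree.Node 1 [:: enc_t t1; enc_t t2]
  | FRel r ts => GenTree.Node 2 (GenTree.Leaf (cr r) :: [seq enc_t (ts i) | i <- enum 'I_(rarity r)])
  | FNot p => GenTree.Node 3 [:: enc_f p]
  | FAnd p q => GenTree.Node 4 [:: enc_f p; enc_f q]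
  | FOr p q => GenTree.Node 5 [:: enc_f p; enc_f q]
  | FImp p q => GenTree.Node 6 [:: enc_f p; enc_f q]
  | FAll p => GenTree.Node 7 [:: enc_f p]
  | FEx p => GenTree.Node 8 [:: enc_f p]
  end.

Lemma enc_f_inj : injective enc_f.
Proof.
elim => [|t1 t2|r ts|p IH|p IHp q IHq|p IHp q IHq|p IHp q IHq|p IH|p IH]
  [|u1 u2|r' us|p'|p' q'|p' q'|p' q'|p'|p'] //=.
- by case=> /enc_t_inj -> /enc_t_inj ->.
- case=> /cr_inj e; subst r' => /eq_in_map h.
  congr FRel; apply/funext => i; apply: enc_t_inj; apply: h; exact: mem_enum.
- by case=> /IH ->.
- by case=> /IHp -> /IHq ->.
- by case=> /IHp -> /IHq ->.
- by case=> /IHp -> /IHq ->.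
- by case=> /IH ->.
- by case=> /IH ->.
Qed.

Definition codeF (p : form sg) : nat := pickle (enc_f p).
Lemma codeF_inj : injective codeF.
Proof. by move=> p q /(pcan_inj pickleK) /enc_f_inj. Qed.
End Enc.
Arguments codeF {sg}.
Arguments codeF_inj {sg cf cr}.
Section Sem.
Variable sg : signature.
Variable M : structure sg.
Local Notation X := (carrier M).

Fixpoint ext (s : seq X) (env : nat -> X) : nat -> X :=
  if s is a :: s' then ext s' (scons a env) else env.

Definition allin (B : set X) (s : seq X) := forall x, List.In x s -> B x.

Lemma sat_All (B : set X) (chi : form sg) n env :
  sat_in B env (iter n (@FAll sg) chi) <->
  forall s, size s = n -> allin B s -> sat_in B (ext s env) chi.
Proof.
elim: n env => [|n IH] env /=.
  split; first by move=> h [|a s].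
  by move=> h; apply: (h [::]) => // x [].
split.
  move=> h [//|a s] /= [sz] al.
  have Ba : B a by apply: al; left.
  by apply: ((IH (scons a env)).1 (h a Ba) s sz) => x hx; apply: al; right.
move=> h a Ba; apply: (IH (scons a env)).2 => s sz al.
apply: (h (a :: s)) => /=; first by rewrite sz.
by move=> x [<-|hx] //; apply: al.
Qed.

Lemma sat_Ex (B : set X) (chi : form sg) n env :
  sat_in B env (iter n (@FEx sg) chi) <->
  exists s, [/\ size s = n, allin B s & sat_in B (ext s env) chi].
Proof.
elim: n env => [|n IH] env /=.
  split; first by move=> h; exists [::]; split=> // x [].
  by move=> [[|a s] [sz al h]].
split.
  case=> a Ba /IH [s [sz al h]]; exists (a :: s); split=> //=; first by rewrite sz.
  by move=> x [<-|hx] //; apply: al.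
move=> [s [sz al h]]; case: s sz al h => [//|a s] /= [sz] al h; exists a; first by apply: al; left.
apply/IH; exists s; split=> //; by move=> x hx; apply: al; right.
Qed.

Lemma qfree_indep (B B' : set X) env (p : form sg) :
  qfree p -> (sat_in B env p <-> sat_in B' env p).
Proof.
elim: p env => //=.
- by move=> p IH env /IH ->.
- by move=> p IHp q IHq env [/IHp h1 /IHq h2]; rewrite h1 h2.
- by move=> p IHp q IHq env [/IHp h1 /IHq h2]; rewrite h1 h2.
- by move=> p IHp q IHq env [/IHp h1 /IHq h2]; rewrite h1 h2.
Qed.

Lemma eval_bound k (t : term sg) (e e' : nat -> X) :
  term_bound k t -> (forall i, (i < k)%N -> e i = e' i) -> eval e t = eval e' t.
Proof.
elim: t => [n|f ts IH] /= hb he; first exact: he.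
by congr ifun; apply/funext => i; apply: IH.
Qed.

Lemma sat_bound (B : set X) (p : form sg) k (e e' : nat -> X) :
  form_bound k p -> (forall i, (i < k)%N -> e i = e' i) ->
  (sat_in B e p <-> sat_in B e' p).
Proof.
elim: p k e e' => /=.
- by [].
- by move=> t1 t2 k e e' [h1 h2] he; rewrite (eval_bound _ _ _ _ h1 he) (eval_bound _ _ _ _ h2 he).
- move=> r ts k e e' hb he.
  have -> : (fun i => eval e (ts i)) = (fun i => eval e' (ts i)) by
    apply/funext => i; apply: (eval_bound _ _ _ _ (hb i) he).
  by [].
- by move=> p IH k e e' hb he; rewrite (IH k e e').
- by move=> p IHp q IHq k e e' [h1 h2] he; rewrite (IHp k e e') ?(IHq k e e').
- by move=> p IHp q IHq k e e' [h1 h2] he; rewrite (IHp k e e') ?(IHq k e e').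
- by move=> p IHp q IHq k e e' [h1 h2] he; rewrite (IHp k e e') ?(IHq k e e').
- move=> p IH k e e' hb he; split=> h a Ba.
    by apply/(IH k.+1 (scons a e) (scons a e') hb _).1; [case=> //= i /he|apply: h].
  by apply/(IH k.+1 (scons a e) (scons a e') hb _).2; [case=> //= i /he|apply: h].
- move=> p IH k e e' hb he; split=> -[a Ba h]; exists a => //.
    by apply/(IH k.+1 (scons a e) (scons a e') hb _).1; [case=> //= i /he|].
  by apply/(IH k.+1 (scons a e) (scons a e') hb _).2; [case=> //= i /he|].
Qed.
End Sem.
Arguments ext {sg M}.
Arguments allin {sg M}.
Arguments sat_All {sg M}.
Arguments sat_Ex {sg M}.
Arguments qfree_indep {sg M}.
Arguments sat_bound {sg M}.
Section Main.
Variable sg : signature.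
Variable M : structure sg.
Local Notation X := (carrier M).
Variable code : X -> nat.
Hypothesis code_inj : injective code.
Variable cf : funsym sg -> nat.
Variable cr : relsym sg -> nat.
Hypothesis cf_inj : injective cf.
Hypothesis cr_inj : injective cr.
Variable x0 : X.
Let env0 : nat -> X := fun _ => x0.
Variable T : set (form sg).
Hypothesis hT : forall phi, T phi -> Pi2_sentence phi.

Fixpoint maxc (s : seq X) : nat :=
  if s is y :: s' then maxn (code y) (maxc s') else 0.
Lemma maxcP x s : List.In x s -> (code x <= maxc s)%N.
Proof.
elim: s => [//|y s IH] /= [<-|/IH h]; first exact: leq_maxl.
by apply: leq_trans h (leq_maxr _ _).
Qed.

Definition reqr (phi : form sg) n m (psi : form sg) (a : seq X) (B : set X) :=
  T phi -> phi = iter n (@FAll sg) (iter m (@FEx sg) psi) -> qfree psi ->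
  size a = n -> allin B a -> sat_in B (ext a env0) (iter m (@FEx sg) psi).

Lemma reqr_open phi n m psi a B : reqr phi n m psi a B ->
  exists K, forall B', Cyl code K B B' -> reqr phi n m psi a B'.
Proof.
move=> h.
have [al|nal] := pselect (allin B a); last first.
  have [x [xa nBx]] : exists x, List.In x a /\ ~ B x.
    apply: contra_notP nal => H x xa; apply: contra_notP H => nx; by exists x.
  exists (code x).+1 => B' hB' _ _ _ _ al'.
  by case: nBx; apply/(hB' x (ltnSn _)); apply: al'.
have [[Tp [e [q sz]]]|nP] := pselect (T phi /\ phi = iter n (@FAll sg) (iter m (@FEx sg) psi) /\ qfree psi /\ size a = n); last first.
  by exists 0 => B' _ Tp e q sz _; case: nP.
have /sat_Ex [s [ss als hs]] := h Tp e q sz al.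
exists (maxc s).+1 => B' hB' _ _ _ _ al'.
apply/sat_Ex; exists s; split=> //.
  move=> x xs; apply/(hB' x); last exact: als.
  by rewrite ltnS; apply: maxcP.
by apply/(qfree_indep B B' _ _ q).
Qed.

Definition code_r (phi : form sg) (n m : nat) (psi : form sg) (a : seq X) : nat :=
  pickle (codeF cf cr phi, n, m, codeF cf cr psi, map code a).

Lemma code_r_inj phi n m psi a phi' n' m' psi' a' :
  code_r phi n m psi a = code_r phi' n' m' psi' a' ->
  [/\ phi = phi', n = n', m = m', psi = psi' & a = a'].
Proof.
move=> /(pcan_inj pickleK) [/(codeF_inj cf_inj cr_inj) -> -> ->
   /(codeF_inj cf_inj cr_inj) -> /(inj_map code_inj) ->].
by [].
Qed.

Definition req (k : nat) (B : set X) :=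
  forall phi n m psi a, code_r phi n m psi a = k -> reqr phi n m psi a B.

Lemma req_open k B : req k B -> exists K, forall B', Cyl code K B B' -> req k B'.
Proof.
move=> h.
have [[phi [n [m [psi [a ca]]]]]|nx] :=
  pselect (exists phi n m psi a, code_r phi n m psi a = k); last first.
  exists 0 => B' _ phi n m psi a ca; case: nx; by exists phi, n, m, psi, a.
have [K hK] := reqr_open _ _ _ _ _ _ (h _ _ _ _ _ ca).
exists K => B' hB' phi' n' m' psi' a' ca'.
rewrite -ca' in ca; have [<- <- <- <- <-] := code_r_inj _ _ _ _ _ _ _ _ _ _ ca.
exact: hK.
Qed.

Lemma closed_sub B : (forall K, exists B', sub_closed B' /\ Cyl code K B B') ->
  sub_closed B.
Proof.
move=> h f args hargs.
set K := (maxn (\max_(i < farity f) code (args i)) (code (ifun args))).+1.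
have [B' [scB' cB']] := h K.
apply/(cB' (ifun args)); first by rewrite ltnS leq_maxr.
apply: scB' => i; apply/(cB' (args i)); last exact: hargs.
rewrite ltnS; apply: (leq_trans _ (leq_maxl _ _)).
first [exact: (leq_bigmax i) | exact: leq_bigmax | (rewrite (bigD1 i) //=; exact: leq_maxl)].
Qed.

Lemma SubModels_SS : SubModels M T = SS (@sub_closed sg M) req.
Proof.
apply/seteqP; split=> B [scB hB]; split=> //.
  move=> k phi n m psi a _ Tp e q sz al.
  have := hB phi Tp env0; rewrite e => /sat_All h; exact: h a sz al.
move=> phi Tp env.
have [sen [n [m [psi [q e]]]]] := hT _ Tp.
apply/(sat_bound B phi 0 env env0 sen) => //.
rewrite e; apply/sat_All => a sz al.
exact: (hB _ phi n m psi a erefl Tp e q sz al).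
Qed.
End Main.
Lemma inj_of_countable (A : Type) : countable [set: A] ->
  exists f : A -> nat, injective f.
Proof.
move=> /countable_injP [f hf]; exists f => x y e.
by apply: hf => //; apply: mem_set.
Qed.

Theorem corollary5p63 (sg : signature) (M : structure sg) (T : set (form sg)) :
  countable [set: funsym sg] ->
  countable [set: relsym sg] ->
  countable [set: carrier M] ->
  (forall phi, T phi -> Pi2_sentence phi) ->
  countable (SubModels M T) \/ (SubModels M T #= [set: set nat])%card.
Proof.
move=> /inj_of_countable [cf cfi] /inj_of_countable [cr cri]
  /inj_of_countable [code codei] hT.
have [[x0 _]|nx] := pselect (exists x : carrier M, True); last first.
  left; apply: (cnt_sub (B := [set set0])) => // B _ /=.
  apply/funext => x; case: nx; by exists x.
rewrite (SubModels_SS sg M code cf cr x0 T hT).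
set S := SS _ _.
have [cS|nS] := pselect (countable S); first by left.
right.
have [L [hL Linj]] := perfect_set codei (closed_sub sg M code)
  (req_open sg M code codei cf cr cfi cri x0 T) nS.
apply: Cantor_Bernstein.
  apply/pcard_injP; exists (fun B => code @` B) => B1 B2 _ _ e.
  apply/funext => x; apply/propext; split => h.
    have : (code @` B1) (code x) by exists x.
    by rewrite e => -[y hy /codei <-].
  have : (code @` B2) (code x) by exists x.
  by rewrite -e => -[y hy /codei <-].
apply/pcard_leP; apply/injfunPex.
exists (fun A : set nat => L (fun n => `[< A n >])).
  by move=> A _; apply: hL.
move=> A1 A2 _ _ /Linj e; apply/funext => n; apply/propext.
apply: asbool_eq_equiv; exact: (congr1 (fun g => g n) e).
Qed.
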